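(* Let $E$ be a finite set of events with timestamps $\tau(e)\in\mathbb{R}$, let $t_w>0$ be real and $n\ge1$ an integer, and let $\mathcal{I}$ be the family of all $T\subseteq E$ such that $|\{e\in T:\tau(e)\in[t,t+t_w)\}|\le n$ for every $t\in\mathbb{R}$. Let $T\in\mathcal{I}$ and $a\in E$ with $T\cup\{a\}\notin\mathcal{I}$. Then $|\{e\in T:\tau(e)\in(\tau(a)-t_w,\tau(a)+t_w)\}|\ge n$.
   Context: In the paper, an element $a$ with $T\in\mathcal{I}$ but $T\cup\{a\}\notin\mathcal{I}$ is called blocked in $T$, and $(\tau(a)-t_w,\tau(a)+t_w)$ is called the ball around $a$. *)

(* Defs.v *)
From mathcomp Require Import all_boot all_order all_algebra.
Set Implicit Arguments. Unset Strict Implicit. Unset Printing Implicit Defensive.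
Import Order.TTheory GRing.Theory Num.Theory.
Local Open Scope ring_scope.

Definition indep (R : realFieldType) (E : finType) (tau : E -> R)
  (tw : R) (n : nat) (T : {set E}) : Prop :=
  forall t : R, (#|[set e in T | ((t <= tau e) && (tau e < t + tw))%R]| <= n)%N.

(* Main.v *)
Require Import Defs.
From Stdlib Require Import Classical.
From mathcomp Require Import all_boot all_order all_algebra.
Import Order.TTheory GRing.Theory Num.Theory.
Local Open Scope ring_scope.

Theorem lemma2 (R : realFieldType) (E : finType) (tau : E -> R) (tw : R)
  (n : nat) (T : {set E}) (a : E) :
  0 < tw -> (1 <= n)%N ->
  indep tau tw n T -> ~ indep tau tw n (a |: T) ->
  (n <= #|[set e in T | ((tau a - tw < tau e) && (tau e < tau a + tw))%R]|)%N.
Proof.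
move=> tw0 n1 hT hnot.
have [t ht] : exists t, (n < #|[set e in a |: T | ((t <= tau e) && (tau e < t + tw))%R]|)%N.
  apply/not_all_not_ex => H; apply: hnot => t.
  by rewrite leqNgt; apply/negP => /(fun h => H t h).
set W := [set e in T | ((t <= tau e) && (tau e < t + tw))%R].
have hW := hT t; rewrite -/W in hW.
have sub : [set e in a |: T | ((t <= tau e) && (tau e < t + tw))%R] \subset a |: W.
  apply/subsetP => e; rewrite !inE => /andP[/orP[/eqP->|eT] w].
    by rewrite eqxx.
  by rewrite eT w orbT.
have ain : (t <= tau a) && (tau a < t + tw).
  apply/negPn/negP => na.
  have sub2 : [set e in a |: T | ((t <= tau e) && (tau e < t + tw))%R] \subset W.
    apply/subsetP => e; rewrite !inE => /andP[/orP[/eqP->|eT] w].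
      by rewrite w in na.
    by rewrite eT w.
  by have := subset_leq_card sub2; rewrite leqNgt (leq_ltn_trans hW ht).
have c1 := subset_leq_card sub.
have c2 : (#|a |: W| <= #|W|.+1)%N by rewrite cardsU1; case: (a \in W).
have nW : (n <= #|W|)%N by move: (leq_trans ht (leq_trans c1 c2)); rewrite ltnS.
apply: (leq_trans nW); apply: subset_leq_card; apply/subsetP => e.
rewrite !inE => /andP[eT /andP[h1 h2]]; rewrite eT /=.
case/andP: ain => a1 a2.
apply/andP; split.
  by rewrite ltrBlDr; apply: (lt_le_trans a2); rewrite lerD2r.
by apply: (lt_le_trans h2); rewrite lerD2r.
Qed.
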